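(* Let $\mathcal{S}\subset\mathbb{R}_{\geq 0}$ be a measurable set with positive Lebesgue measure. Let $G$ be a probability distribution on $\mathbb{R}$ and $\pi:\mathbb{R}_{\geq 0}\to[0,1]$ a measurable function, and let $(\mu,|Z|,D)$ be generated by $\mu\sim G$, $|Z|\mid\mu\sim|\mathrm{N}(\mu,1)|$, $D\mid(|Z|,\mu)\sim\mathrm{Bernoulli}(\pi(|Z|))$. Then the conditional distribution of $|Z|$ given $\{|Z|\in\mathcal{S},\,D=1\}$ equals the conditional distribution of $|Z|$ given $\{|Z|\in\mathcal{S}\}$ if and only if there exists a constant $a\in(0,1]$ such that $\pi(z)=a$ for Lebesgue-almost every $z\in\mathcal{S}$.
   Context: $|\mathrm{N}(\mu,1)|$ denotes the folded normal distribution, i.e. the law of $|X|$ for $X\sim\mathrm{N}(\mu,1)$. Here $\mu$ is a latent signal-to-noise ratio, $|Z|$ an absolute z-score and $D$ an indicator that the study is published; $\pi(z)=\mathbb{P}(D=1\mid |Z|=z)$ is the publication probability. *)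

(* Defs.v *)
From HB Require Import structures.
From mathcomp Require Import all_boot all_order all_algebra.
From mathcomp Require Import all_classical all_reals all_analysis.
Set Implicit Arguments. Unset Strict Implicit. Unset Printing Implicit Defensive.
Import Order.TTheory GRing.Theory Num.Theory.
Import numFieldNormedType.Exports.
Local Open Scope classical_set_scope.
Local Open Scope ring_scope.

Definition folded_normal_pdf (R : realType) (mu z : R) : R :=
  if 0 <= z then normal_pdf mu 1 z + normal_pdf (- mu) 1 z else 0.

Definition prob_absZ (R : realType) (G : probability R R) (A : set R) : \bar R :=
  (\int[G]_mu (\int[lebesgue_measure]_(z in A) (folded_normal_pdf mu z)%:E))%E.

(* P(|Z| \in A, D = 1) *)
Definition prob_absZ_pub (R : realType) (G : probability R R) (pi : R -> R)
  (A : set R) : \bar R :=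
  (\int[G]_mu (\int[lebesgue_measure]_(z in A)
      (folded_normal_pdf mu z * pi z)%:E))%E.

(* The conditional distribution of |Z| given {|Z| \in S, D = 1} equals the
   conditional distribution of |Z| given {|Z| \in S}; the former is only
   defined when P(|Z| \in S, D = 1) > 0, which is required. *)
Definition cond_dists_equal (R : realType) (G : probability R R) (pi : R -> R)
  (S : set R) : Prop :=
  (0 < prob_absZ_pub G pi S)%E /\
  forall B : set R, measurable B ->
    fine (prob_absZ_pub G pi (B `&` S)) / fine (prob_absZ_pub G pi S)
    = fine (prob_absZ G (B `&` S)) / fine (prob_absZ G S).

(* Main.v *)
Require Import Defs.
From HB Require Import structures.
From mathcomp Require Import all_boot all_order all_algebra.
From mathcomp Require Import all_classical all_reals all_analysis.
From mathcomp Require Import measurable_realfun.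
Import Order.TTheory GRing.Theory Num.Theory.
Import numFieldNormedType.Exports.
Local Open Scope classical_set_scope.
Local Open Scope ring_scope.

Lemma npdfE (R : realType) (m z : R) :
  normal_pdf m 1 z = normal_peak 1 * expR (- (z - m) ^+ 2 / 2).
Proof. by rewrite /normal_pdf oner_eq0 /normal_fun expr1n. Qed.

Lemma K_ge0 (R : realType) (m z : R) : 0 <= folded_normal_pdf m z.
Proof.
rewrite /folded_normal_pdf; case: ifP => // _.
by rewrite addr_ge0 // normal_pdf_ge0.
Qed.

Lemma K_gt0 (R : realType) (m z : R) : 0 <= z -> 0 < folded_normal_pdf m z.
Proof.
move=> z0; rewrite /folded_normal_pdf z0 ltr_wpDr ?normal_pdf_ge0 //.
by rewrite npdfE mulr_gt0 ?expR_gt0 // normal_peak_gt0 // oner_neq0.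
Qed.

Lemma mnonneg (R : realType) : measurable [set x : R | 0 <= x].
Proof. by rewrite -set_itvcy; exact: measurable_itv. Qed.

Lemma K_meas (R : realType) :
  measurable_fun setT (fun p : R * R => folded_normal_pdf p.1 p.2).
Proof.
have -> : (fun p : R * R => folded_normal_pdf p.1 p.2) =
  (fun p : R * R => \1_[set z : R | 0 <= z] p.2 *
     (normal_peak 1 * expR (- (p.2 - p.1) ^+ 2 / 2) +
      normal_peak 1 * expR (- (p.2 - - p.1) ^+ 2 / 2))).
  apply/funext => p; rewrite /folded_normal_pdf !npdfE indicE.
  case: ifPn => h; first by rewrite mem_set // mul1r.
  by rewrite memNset ?mul0r //; apply/negP.
apply: measurable_funM.
  apply: measurableT_comp; last exact: measurable_snd.
  apply: measurable_indic; exact: mnonneg.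
apply: measurable_funD; apply: measurable_funM => //.
  apply: measurableT_comp; first exact: measurable_expR.
  apply: measurable_funM => //.
  apply: measurable_funN.
  apply: measurable_funX.
  apply: measurable_funB; [exact: measurable_snd|exact: measurable_fst].
apply: measurableT_comp; first exact: measurable_expR.
apply: measurable_funM => //.
apply: measurable_funN.
apply: measurable_funX.
apply: measurable_funB; first exact: measurable_snd.
apply: measurable_funN; exact: measurable_fst.
Qed.

Lemma K_meas1 (R : realType) (m : R) : measurable_fun setT (folded_normal_pdf m).
Proof.
have -> : folded_normal_pdf m =
  (fun z : R => \1_[set z : R | 0 <= z] z * (normal_pdf m 1 z + normal_pdf (- m) 1 z)).
  apply/funext => z; rewrite /folded_normal_pdf indicE.
  case: ifPn => h; first by rewrite mem_set // mul1r.
  by rewrite memNset ?mul0r //; apply/negP.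
apply: measurable_funM; first by apply: measurable_indic; exact: mnonneg.
by apply: measurable_funD; exact: measurable_normal_pdf.
Qed.

Lemma integral_pos d (T : measurableType d) (R : realType) (mu : measure T R)
  (D : set T) (f : T -> \bar R) : measurable D -> measurable_fun D f ->
  (forall x, D x -> (0 < f x)%E) -> (0 < mu D)%E ->
  (0 < \int[mu]_(x in D) f x)%E.
Proof.
move=> mD mf fpos muD.
have ge0 : (0 <= \int[mu]_(x in D) f x)%E.
  by apply: integral_ge0 => x Dx; exact/ltW/fpos.
rewrite lt_neqAle ge0 andbT; apply/eqP => /esym H0.
have : (\int[mu]_(x in D) `|f x| = 0)%E.
  rewrite -H0; apply: eq_integral => x /[!inE] Dx.
  by rewrite gee0_abs // ltW // fpos.
move/(ae_eq_integral_abs mu mD mf) => [N [mN N0 sub]].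
have DN : D `<=` N.
  move=> x Dx; apply: sub => /= /(_ Dx) fx0.
  by move: (fpos x Dx); rewrite fx0 ltxx.
have := le_measure mu; move=> /(_ D N) h.
have : (mu D <= mu N)%E by apply: h => //; rewrite inE.
by rewrite N0 leNgt muD.
Qed.

Lemma inner_meas (R : realType) (A : set R) (h : R -> R) :
  measurable A -> measurable_fun setT h -> (forall z, A z -> 0 <= h z) ->
  measurable_fun setT (fun m => \int[lebesgue_measure]_(z in A)
                                   (folded_normal_pdf m z * h z)%:E)%E.
Proof.
move=> mA mh h0.
pose F := fun p : R * R => ((folded_normal_pdf p.1 p.2 * h p.2) * \1_A p.2)%:E.
have -> : (fun m => \int[lebesgue_measure]_(z in A)
                      (folded_normal_pdf m z * h z)%:E)%E
    = fubini_F lebesgue_measure F.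
  apply/funext => m; rewrite /fubini_F [LHS]integral_mkcond.
  apply: eq_integral => z _; rewrite /F patchE indicE /=.
  by case: ifPn => zA; rewrite ?mulr1 ?mulr0.
apply: measurable_fun_fubini_tonelli_F.
  apply/measurable_EFinP; apply: measurable_funM; first apply: measurable_funM.
  - exact: K_meas.
  - exact: (measurableT_comp mh measurable_snd).
  - apply: (measurableT_comp _ measurable_snd); exact: measurable_indic.
move=> p; rewrite /F lee_fin indicE; have [pA|pA] := boolP (p.2 \in A);
  rewrite ?pA /= ?mulr0 //.
by rewrite mulr1 mulr_ge0 ?K_ge0 // h0 //; exact: set_mem.
Qed.

Lemma inner_le2 (R : realType) (A : set R) (h : R -> R) (m : R) :
  measurable A -> measurable_fun setT h -> (forall z, A z -> 0 <= h z <= 1) ->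
  (\int[lebesgue_measure]_(z in A) (folded_normal_pdf m z * h z)%:E <= 2%:E)%E.
Proof.
move=> mA mh h01.
pose g := fun z : R => normal_pdf m 1 z + normal_pdf (- m) 1 z.
have mg : measurable_fun setT g.
  by apply: measurable_funD; exact: measurable_normal_pdf.
have g0 : forall z, 0 <= g z by move=> z; rewrite addr_ge0 ?normal_pdf_ge0.
apply: (@le_trans _ _ (\int[lebesgue_measure]_(z in A) (g z)%:E)%E).
  apply: ge0_le_integral => //.
  - move=> z Az; rewrite lee_fin mulr_ge0 ?K_ge0 //.
    by case/andP: (h01 z Az).
  - apply/measurable_EFinP; apply: measurable_funTS.
    by apply: measurable_funM => //; exact: K_meas1.
  - by apply/measurable_EFinP; exact: measurable_funTS.
  - move=> z Az; rewrite lee_fin; case/andP: (h01 z Az) => h0 h1.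
    apply: (@le_trans _ _ (folded_normal_pdf m z)).
      by rewrite ler_piMr ?K_ge0.
    by rewrite /folded_normal_pdf; case: ifP.
apply: (@le_trans _ _ (\int[lebesgue_measure]_(z in setT) (g z)%:E)%E).
  apply: ge0_subset_integral => //.
  - by apply/measurable_EFinP.
  - by move=> z _; rewrite lee_fin.
rewrite /g.
under eq_integral do rewrite EFinD.
rewrite ge0_integralD //.
- by rewrite !integral_normal_pdf.
- by move=> z _; rewrite lee_fin normal_pdf_ge0.
- by apply/measurable_EFinP; exact: measurable_normal_pdf.
- by move=> z _; rewrite lee_fin normal_pdf_ge0.
- by apply/measurable_EFinP; exact: measurable_normal_pdf.
Qed.

Lemma outer_fin (R : realType) (G : probability R R) (f : R -> \bar R) :
  measurable_fun setT f -> (forall m, (0 <= f m <= 2%:E)%E) ->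
  ((\int[G]_m f m) \is a fin_num /\ 0 <= \int[G]_m f m)%E.
Proof.
move=> mf f02.
have ge0 : (0 <= \int[G]_m f m)%E.
  by apply: integral_ge0 => m _; case/andP: (f02 m).
split => //; rewrite ge0_fin_numE //.
apply: (@le_lt_trans _ _ (\int[G]_(m in setT) (cst 2%:E) m)%E).
  apply: ge0_le_integral => //.
  - by move=> m _; case/andP: (f02 m).
  - by move=> m _; case/andP: (f02 m).
rewrite integral_cst //.
apply: (@le_lt_trans _ _ (2%:E * 1)%E); last by rewrite mule1 ltry.
by apply: lee_wpmul2l => //; exact: probability_le1.
Qed.

Lemma I_meas (R : realType) (A : set R) : measurable A ->
  measurable_fun setT (fun m => \int[lebesgue_measure]_(z in A)
                                   (folded_normal_pdf m z)%:E)%E.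
Proof.
move=> mA.
have -> : (fun m => \int[lebesgue_measure]_(z in A) (folded_normal_pdf m z)%:E)%E
  = (fun m => \int[lebesgue_measure]_(z in A) (folded_normal_pdf m z * cst 1 z)%:E)%E.
  by apply/funext => m; apply: eq_integral => z _; rewrite mulr1.
by apply: inner_meas => //.
Qed.

Lemma I_fin (R : realType) (G : probability R R) (A : set R) : measurable A ->
  (prob_absZ G A \is a fin_num /\ 0 <= prob_absZ G A)%E.
Proof.
move=> mA; apply: outer_fin; first exact: I_meas.
move=> m; rewrite integral_ge0 /=; last by move=> z _; rewrite lee_fin K_ge0.
have := @inner_le2 R A (cst 1) m mA (measurable_cst _).
under eq_integral do rewrite mulr1.
by apply => z _; rewrite ler01 lexx.
Qed.

Lemma I_pos (R : realType) (G : probability R R) (A : set R) : measurable A ->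
  A `<=` [set x | 0 <= x] -> (0 < lebesgue_measure A)%E ->
  (0 < prob_absZ G A)%E.
Proof.
move=> mA A0 lA; rewrite /prob_absZ.
apply: integral_pos => //.
- exact: I_meas.
- move=> m _; apply: integral_pos => //.
    by apply/measurable_EFinP; apply: measurable_funTS; exact: K_meas1.
  by move=> z Az; rewrite lte_fin K_gt0 //; exact: A0.
- by move: (@lte01 R); rewrite -(probability_setT G).
Qed.

Lemma Zc (R : realType) (G : probability R R) (A : set R) (k : R) :
  measurable A -> 0 <= k ->
  (\int[G]_m (\int[lebesgue_measure]_(z in A) (folded_normal_pdf m z * k)%:E)
   = k%:E * prob_absZ G A)%E.
Proof.
move=> mA k0; rewrite /prob_absZ -ge0_integralZl //; last 2 first.
- exact: I_meas.
- by move=> m _; apply: integral_ge0 => z _; rewrite lee_fin K_ge0.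
apply: eq_integral => m _.
rewrite -ge0_integralZl //.
- by apply: eq_integral => z _; rewrite EFinM muleC.
- by apply/measurable_EFinP; apply: measurable_funTS; exact: K_meas1.
- by move=> z _; rewrite lee_fin K_ge0.
Qed.

Lemma key (R : realType) (G : probability R R) (A : set R) (f g : R -> R) :
  measurable A -> A `<=` [set x | 0 <= x] ->
  measurable_fun setT f -> measurable_fun setT g ->
  (forall z, A z -> 0 <= f z <= 1) -> (forall z, A z -> f z < g z) ->
  (\int[G]_m (\int[lebesgue_measure]_(z in A) (folded_normal_pdf m z * g z)%:E)
   = \int[G]_m (\int[lebesgue_measure]_(z in A) (folded_normal_pdf m z * f z)%:E))%E ->
  lebesgue_measure A = 0%E.
Proof.
move=> mA A0 mf mg f01 fg E.
pose J := fun m => (\int[lebesgue_measure]_(z in A) (folded_normal_pdf m z * f z)%:E)%E.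
pose H := fun m => (\int[lebesgue_measure]_(z in A)
                     (folded_normal_pdf m z * (g z - f z))%:E)%E.
have mJ : measurable_fun setT J.
  by apply: inner_meas => // z Az; case/andP: (f01 z Az).
have mH : measurable_fun setT H.
  apply: inner_meas => //; first exact: measurable_funB.
  by move=> z Az; rewrite subr_ge0 ltW // fg.
have J0 : forall m, (0 <= J m)%E.
  move=> m; apply: integral_ge0 => z Az; rewrite lee_fin mulr_ge0 ?K_ge0 //.
  by case/andP: (f01 z Az).
have H0 : forall m, (0 <= H m)%E.
  move=> m; apply: integral_ge0 => z Az; rewrite lee_fin mulr_ge0 ?K_ge0 //.
  by rewrite subr_ge0 ltW // fg.
have inner : forall m,
  (\int[lebesgue_measure]_(z in A) (folded_normal_pdf m z * g z)%:E = J m + H m)%E.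
  move=> m; rewrite /J /H -ge0_integralD //.
  - by apply: eq_integral => z _; rewrite -EFinD -mulrDr addrCA subrr addr0.
  - move=> z Az; rewrite lee_fin mulr_ge0 ?K_ge0 //.
    by case/andP: (f01 z Az).
  - apply/measurable_EFinP; apply: measurable_funTS.
    by apply: measurable_funM => //; exact: K_meas1.
  - by move=> z Az; rewrite lee_fin mulr_ge0 ?K_ge0 // subr_ge0 ltW // fg.
  - apply/measurable_EFinP; apply: measurable_funTS.
    apply: measurable_funM => //; first exact: K_meas1.
    exact: measurable_funB.
have E2 : (\int[G]_m J m + \int[G]_m H m = \int[G]_m J m)%E.
  rewrite -ge0_integralD //; try (by move=> m _; exact: J0);
    try (by move=> m _; exact: H0).
  rewrite -E; apply: eq_integral => m _; exact/esym/inner.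
have Jfin : (\int[G]_m J m \is a fin_num)%E.
  have Jb : forall m, (0 <= J m <= 2%:E)%E.
    by move=> m; rewrite J0 /=; apply: inner_le2.
  by have [] := outer_fin _ G _ mJ Jb.
have HG0 : (\int[G]_m H m = 0)%E.
  have := congr1 (fun t => t - \int[G]_m J m)%E E2.
  by rewrite /= addeAC subee // add0e.
apply/eqP; rewrite eq_le measure_ge0 andbT leNgt; apply/negP => lA.
have : (0 < \int[G]_m H m)%E.
  apply: integral_pos => //.
  - move=> m _; apply: integral_pos => //.
      apply/measurable_EFinP; apply: measurable_funTS.
      apply: measurable_funM => //; first exact: K_meas1.
      exact: measurable_funB.
    by move=> z Az; rewrite lte_fin mulr_gt0 ?K_gt0 ?subr_gt0 ?fg //; exact: A0.
  - by move: (@lte01 R); rewrite -(probability_setT G).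
by rewrite HG0 ltxx.
Qed.

Theorem proposition1 (R : realType) (S : set R) (G : probability R R)
  (pi : R -> R) :
  measurable S -> S `<=` [set x : R | 0 <= x] ->
  (0 < lebesgue_measure S)%E ->
  measurable_fun [set x : R | 0 <= x] pi ->
  (forall z, 0 <= z -> 0 <= pi z <= 1) ->
  cond_dists_equal G pi S <->
  exists a : R, 0 < a <= 1 /\
    {ae lebesgue_measure, forall z, S z -> pi z = a}.
Proof.
move=> mS S0 lS mpi pi01.
pose pi' := pi \_ [set x : R | 0 <= x].
have mpi' : measurable_fun setT pi'.
  by have [h _] := @measurable_restrictT _ _ _ _ _ pi (mnonneg R); exact: h.
have pi'E : forall z, 0 <= z -> pi' z = pi z.
  by move=> z z0; rewrite /pi' patchE mem_set.
have Ppub_eq : forall A, A `<=` [set x | 0 <= x] -> prob_absZ_pub G pi A =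
   (\int[G]_m (\int[lebesgue_measure]_(z in A)
      (folded_normal_pdf m z * pi' z)%:E))%E.
  move=> A A0; apply: eq_integral => m _; apply: eq_integral => z.
  by rewrite inE => Az; rewrite pi'E // A0.
have PS_pos : (0 < prob_absZ G S)%E by exact: I_pos.
have [PSfin PS0] := I_fin _ G _ mS.
split.
- case=> Ppos heq.
  have pi'01 : forall z, 0 <= z -> 0 <= pi' z <= 1.
    by move=> z z0; rewrite pi'E //; exact: pi01.
  have pub_fin : forall A : set R, measurable A -> A `<=` [set x | 0 <= x] ->
      (prob_absZ_pub G pi A \is a fin_num)%E.
    move=> A mA A0; rewrite Ppub_eq //.
    have mJ : measurable_fun setT (fun m => \int[lebesgue_measure]_(z in A)
                                   (folded_normal_pdf m z * pi' z)%:E)%E.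
      by apply: inner_meas => // z Az; case/andP: (pi'01 z (A0 z Az)).
    have [] // := outer_fin _ G _ mJ.
    move=> m; rewrite integral_ge0 /=; last first.
      by move=> z Az; case/andP: (pi'01 z (A0 z Az)) => h _; rewrite lee_fin mulr_ge0 ?K_ge0.
    by apply: inner_le2 => // z Az; exact: pi'01 (A0 z Az).
  have PubS_fin := pub_fin S mS S0.
  have PubS_le : (prob_absZ_pub G pi S <= prob_absZ G S)%E.
    rewrite Ppub_eq //; apply: ge0_le_integral => //.
    - move=> m _; apply: integral_ge0 => z Sz.
      by case/andP: (pi'01 z (S0 z Sz)) => h _; rewrite lee_fin mulr_ge0 ?K_ge0.
    - by apply: inner_meas => // z Sz; case/andP: (pi'01 z (S0 z Sz)).
    - exact: I_meas.
    - move=> m _; apply: ge0_le_integral => //.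
      + by move=> z Sz; case/andP: (pi'01 z (S0 z Sz)) => h _; rewrite lee_fin mulr_ge0 ?K_ge0.
      + apply/measurable_EFinP; apply: measurable_funTS.
        by apply: measurable_funM => //; exact: K_meas1.
      + by apply/measurable_EFinP; apply: measurable_funTS; exact: K_meas1.
      + move=> z Sz; case/andP: (pi'01 z (S0 z Sz)) => h0 h1.
        by rewrite lee_fin ler_piMr ?K_ge0.
  set p := fine (prob_absZ_pub G pi S).
  set q := fine (prob_absZ G S).
  have p0 : 0 < p by apply: fine_gt0; rewrite Ppos /= ltey_eq PubS_fin.
  have pq : p <= q by apply: fine_le.
  have q0 : 0 < q by exact: lt_le_trans pq.
  pose c := p / q.
  have c0 : 0 < c by exact: divr_gt0.
  have c1 : c <= 1 by rewrite /c ler_pdivrMr // mul1r.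
  have hB : forall B : set R, measurable B ->
      prob_absZ_pub G pi (B `&` S) = (c%:E * prob_absZ G (B `&` S))%E.
    move=> B mB.
    have mBS : measurable (B `&` S) by exact: measurableI.
    have [BSfin _] := I_fin _ G _ mBS.
    have BSpfin : (prob_absZ_pub G pi (B `&` S) \is a fin_num)%E.
      by apply: pub_fin => // z [_ /S0].
    have := heq B mB; rewrite -/p -/q => h.
    rewrite -(fineK BSfin) -(fineK BSpfin) -EFinM; congr EFin.
    rewrite -[LHS](divfK (lt0r_neq0 p0)) h /c.
    by rewrite mulrAC [RHS]mulrC mulrA.
  pose Bp := [set x : R | 0 <= x] `&` pi @^-1` `]c, +oo[.
  pose Bm := [set x : R | 0 <= x] `&` pi @^-1` `]-oo, c[.
  have mBp : measurable Bp by apply: mpi => //; exact: mnonneg.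
  have mBm : measurable Bm by apply: mpi => //; exact: mnonneg.
  have mAp : measurable (Bp `&` S) by exact: measurableI.
  have mAm : measurable (Bm `&` S) by exact: measurableI.
  have Ap0 : Bp `&` S `<=` [set x | 0 <= x] by move=> z [[]].
  have Am0 : Bm `&` S `<=` [set x | 0 <= x] by move=> z [[]].
  have Np : lebesgue_measure (Bp `&` S) = 0%E.
    apply: (@key R G _ (cst c) pi' mAp Ap0 (measurable_cst _) mpi').
    - by move=> z _; rewrite /= (ltW c0) c1.
    - move=> z [[/= z0]]; rewrite /= in_itv /= andbT => h _.
      by rewrite pi'E.
    - rewrite -Ppub_eq // hB //. rewrite Zc //; exact: ltW.
  have Nm : lebesgue_measure (Bm `&` S) = 0%E.
    apply: (@key R G _ pi' (cst c) mAm Am0 mpi' (measurable_cst _)).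
    - by move=> z /Am0; exact: pi'01.
    - move=> z [[/= z0]]; rewrite /= in_itv /= => h _.
      by rewrite pi'E.
    - rewrite -Ppub_eq // hB //. rewrite Zc //; exact: ltW.
  exists c; split; first by rewrite c0 c1.
  exists ((Bp `&` S) `|` (Bm `&` S)); split.
  - exact: measurableU.
  - apply/eqP; rewrite eq_le measure_ge0 andbT.
    have HA : (lebesgue_measure (Bp `&` S) + lebesgue_measure (Bm `&` S) = 0)%E.
      by rewrite Np Nm adde0.
    rewrite -HA; exact: measureU2.
  - move=> z /= hz.
    case: (pselect (S z)) => [Sz|nSz]; last by exfalso; apply: hz.
    have z0 := S0 z Sz.
    case: (ltgtP (pi z) c) => h.
    + by right; split => //; split => //=; rewrite in_itv.
    + by left; split => //; split => //=; rewrite in_itv /= h.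
    + by exfalso; apply: hz.
- case=> a [/andP[a0 a1] hae].
  have eqA : forall A, measurable A -> A `<=` S ->
      prob_absZ_pub G pi A = (a%:E * prob_absZ G A)%E.
    move=> A mA AS.
    have A0 : A `<=` [set x | 0 <= x] by move=> z /AS /S0.
    rewrite Ppub_eq // -Zc //; last exact: ltW.
    apply: eq_integral => m _; apply: ae_eq_integral => //.
    + apply/measurable_EFinP; apply: measurable_funTS.
      by apply: measurable_funM => //; exact: K_meas1.
    + apply/measurable_EFinP; apply: measurable_funTS.
      by apply: measurable_funM => //; exact: K_meas1.
    + apply: filterS hae; first exact: (ae_filter_ringOfSetsType lebesgue_measure).
      move=> z h Az.
      by rewrite pi'E ?h //; [exact: AS | exact: A0].
  split.
  + by rewrite eqA // mule_gt0 // lte_fin.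
  + move=> B mB.
    have mBS : measurable (B `&` S) by exact: measurableI.
    have [BSfin _] := I_fin _ G _ mBS.
    rewrite !eqA //; try by move=> z [].
    rewrite -(fineK BSfin) -(fineK PSfin) -!EFinM /=.
    by rewrite -mulf_div divff ?mul1r // gt_eqF.
Qed.
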